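(* Let $(\lambda_n)_{n\in\mathbb{N}}$ be a sequence of complex numbers with $\sum_{n=0}^{\infty}|\lambda_n|<\infty$. Let $r\in(0,1)$, $L\in\mathbb{C}$, and let $(x_n)_{n\in\mathbb{N}}$ be a complex-valued sequence such that $\lim_{N\to\infty}\mathbb{E}^{\mathrm{Bin}(r)}_{n\le N}x_n=L$. Then \[ \lim_{N\to\infty}\mathbb{E}^{\mathrm{Bin}(r)}_{n\le N}\left(\sum_{k=0}^{n}\lambda_k x_{n-k}\right)=L\cdot\sum_{n=0}^{\infty}\lambda_n . \]
   Context: $\mathbb{N}=\{0,1,2,\dots\}$. For $r\in(0,1)$, a complex sequence $(y_n)_{n\in\mathbb{N}}$ and $N\in\mathbb{N}$, the $N$-th $r$-binomial average is $\mathbb{E}^{\mathrm{Bin}(r)}_{n\le N}y_n=\sum_{n=0}^{N}\binom{N}{n}r^n(1-r)^{N-n}y_n$. In the claim, the averaged sequence is $y_n=\sum_{k=0}^{n}\lambda_k x_{n-k}$. *)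

(* Defs.v *)
From Stdlib Require Import Reals.
From Coquelicot Require Import Coquelicot.
Open Scope R_scope.

Definition binomC (N n : nat) : C := RtoC (Binomial.C N n).

Definition bin_avg (r : R) (y : nat -> C) (N : nat) : C :=
  sum_n (fun n => (binomC N n * RtoC (r ^ n * (1 - r) ^ (N - n)) * y n)%C) N.

Definition conv (lam x : nat -> C) (n : nat) : C :=
  sum_n (fun k => (lam k * x (n - k)%nat)%C) n.

(* Main.v *)
Require Import Defs.
From Stdlib Require Import Reals Lra Lia.
From Coquelicot Require Import Coquelicot.
Open Scope R_scope.

Definition cvC (u : nat -> C) (L : C) :=
  forall eps, 0 < eps -> exists N0, forall N, (N0 <= N)%nat -> Cmod (u N - L)%C < eps.

Lemma cvC_equiv u L : filterlim u eventually (locally L) <-> cvC u L.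
Proof.
  rewrite (filterlim_locally_ball_norm (K:=R_AbsRing) (U:=C_R_NormedModule)).
  split.
  - intros H eps Heps. destruct (H (mkposreal eps Heps)) as [N0 HN].
    exists N0. intros N HN'. specialize (HN N HN'). unfold ball_norm in HN.
    rewrite Cmod_norm. exact HN.
  - intros H eps. destruct (H eps (cond_pos eps)) as [N0 HN]. exists N0.
    intros N HN'. unfold ball_norm. rewrite <- Cmod_norm. apply HN; auto.
Qed.

Ltac ringC := match goal with |- ?a = ?b => change (@eq C a b) end; ring.

Lemma sumC_S (f : nat -> C) n : sum_n f (S n) = (sum_n f n + f (S n))%C.
Proof. rewrite sum_Sn. reflexivity. Qed.

Lemma sumC_ext (f g : nat -> C) n : (forall k, (k <= n)%nat -> f k = g k) -> sum_n f n = sum_n g n.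
Proof. intros H. apply sum_n_ext_loc. exact H. Qed.

Lemma sumC_plus (f g : nat -> C) n : sum_n (fun k => f k + g k)%C n = (sum_n f n + sum_n g n)%C.
Proof. induction n. rewrite !sum_O; reflexivity. rewrite !sumC_S, IHn. idtac. ringC. Qed.

Lemma sumC_scal (c : C) (f : nat -> C) n : sum_n (fun k => c * f k)%C n = (c * sum_n f n)%C.
Proof. induction n. rewrite !sum_O; reflexivity. rewrite !sumC_S, IHn. ringC. Qed.

Lemma sumC_peel (f : nat -> C) n : sum_n f (S n) = (f 0%nat + sum_n (fun m => f (S m)) n)%C.
Proof. induction n. rewrite sumC_S, !sum_O. reflexivity. rewrite sumC_S, IHn, sumC_S. ringC. Qed.

Lemma sumC_zero (f : nat -> C) n : (forall k, (k <= n)%nat -> f k = 0%C) -> sum_n f n = RtoC 0.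
Proof. induction n; intros H. rewrite sum_O; auto. rewrite sumC_S, IHn, H; auto. ringC. Qed.

Lemma sumC_norm (f : nat -> C) n : Cmod (sum_n f n) <= sum_n (fun k => Cmod (f k)) n.
Proof. induction n. rewrite !sum_O; lra. rewrite sumC_S, sum_Sn.
  eapply Rle_trans. apply Cmod_triangle. change (plus ?a ?b) with (a + b). lra. Qed.
Definition wt (r : R) (N n : nat) : R :=
  if (n <=? N)%nat then Binomial.C N n * (r ^ n * (1 - r) ^ (N - n)) else 0.

Lemma bin_avg_wt r y N M : (N <= M)%nat ->
  bin_avg r y N = sum_n (fun n => RtoC (wt r N n) * y n)%C M.
Proof.
  intros H. induction H.
  - unfold bin_avg. apply sumC_ext. intros k Hk. unfold wt, binomC.
    destruct (Nat.leb_spec k N); [|lia]. rewrite <- RtoC_mult. reflexivity.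
  - rewrite sumC_S, <- IHle. unfold wt.
    destruct (Nat.leb_spec (S m) N); [lia|]. ringC.
Qed.

Lemma wt_rec r N n : wt r (S N) (S n) = (1 - r) * wt r N (S n) + r * wt r N n.
Proof.
  unfold wt.
  destruct (Nat.leb_spec (S n) (S N)); destruct (Nat.leb_spec (S n) N);
    destruct (Nat.leb_spec n N); try lia.
  - rewrite <- pascal by lia.
    replace (S N - S n)%nat with (N - n)%nat by lia.
    replace (N - n)%nat with (S (N - S n)) by lia. simpl. ring.
  - assert (n = N) by lia. subst. rewrite !C_n_n. replace (S N - S N)%nat with 0%nat by lia. rewrite Nat.sub_diag. simpl. ring.
  - ring.
Qed.

Definition T (k : nat) (x : nat -> C) (n : nat) : C :=
  if (k <=? n)%nat then x (n - k)%nat else RtoC 0.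

Lemma T_S k x n : T (S k) x n = T 1 (T k x) n.
Proof.
  unfold T. destruct (Nat.leb_spec (S k) n); destruct (Nat.leb_spec 1 n);
  try destruct (Nat.leb_spec k (n - 1)); try lia; try reflexivity.
  f_equal. lia.
Qed.

Lemma rec_T1 r z N :
  bin_avg r (T 1 z) (S N) = (RtoC (1 - r) * bin_avg r (T 1 z) N + RtoC r * bin_avg r z N)%C.
Proof.
  rewrite (bin_avg_wt r (T 1 z) (S N) (S N)) by lia.
  rewrite (bin_avg_wt r (T 1 z) N (S N)) by lia.
  rewrite (bin_avg_wt r z N N) by lia.
  rewrite !sumC_peel. unfold T at 1 3. simpl Nat.leb.
  cbv beta iota.
  assert (E : sum_n (fun m => RtoC (wt r (S N) (S m)) * T 1 z (S m))%C N =
     (RtoC (1 - r) * sum_n (fun m => RtoC (wt r N (S m)) * T 1 z (S m))%C N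
      + RtoC r * sum_n (fun n => RtoC (wt r N n) * z n)%C N)%C).
  { rewrite <- !sumC_scal, <- sumC_plus. apply sumC_ext. intros k Hk.
    unfold T. simpl Nat.leb. replace (S k - 1)%nat with k by lia.
    cbv beta iota. rewrite wt_rec, RtoC_plus, !RtoC_mult. ringC. }
  rewrite E. ringC.
Qed.

Lemma Cmod_RtoC_pos a : 0 <= a -> Cmod (RtoC a) = a.
Proof. intros. rewrite Cmod_R. apply Rabs_pos_eq. auto. Qed.

Lemma rec_conv (u v : nat -> C) (r : R) (L : C) :
  0 < r < 1 ->
  (forall N, u (S N) = (RtoC (1 - r) * u N + RtoC r * v N)%C) ->
  cvC v L -> cvC u L.
Proof.
  intros Hr Hu Hv eps Heps.
  destruct (Hv (eps/2)) as [N0 HN0]; [lra|].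
  set (D := Cmod (u N0 - L)%C).
  assert (Hj : forall j, Cmod (u (N0 + j)%nat - L)%C <= (1 - r) ^ j * D + eps / 2).
  { induction j.
    - rewrite Nat.add_0_r. simpl. assert (0 <= eps/2) by lra. unfold D. lra.
    - replace (N0 + S j)%nat with (S (N0 + j)) by lia. rewrite Hu.
      replace (RtoC (1 - r) * u (N0 + j)%nat + RtoC r * v (N0 + j)%nat - L)%C
        with (RtoC (1 - r) * (u (N0 + j)%nat - L) + RtoC r * (v (N0 + j)%nat - L))%C
        by (rewrite RtoC_minus; ringC).
      eapply Rle_trans. apply Cmod_triangle. rewrite !Cmod_mult, !Cmod_RtoC_pos by lra.
      assert (Cmod (v (N0 + j)%nat - L)%C < eps / 2) by (apply HN0; lia).
      simpl. nra. }
  assert (Hg : is_lim_seq (fun j => (1 - r) ^ j * D) 0).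
  { replace 0 with (0 * D) by ring. apply is_lim_seq_mult'. apply is_lim_seq_geom.
    rewrite Rabs_pos_eq; lra. apply is_lim_seq_const. }
  apply is_lim_seq_spec in Hg. destruct (Hg (mkposreal (eps/2) ltac:(lra))) as [j0 Hj0].
  exists (N0 + j0)%nat. intros N HN.
  replace N with (N0 + (N - N0))%nat by lia.
  eapply Rle_lt_trans. apply Hj.
  specialize (Hj0 (N - N0)%nat ltac:(lia)). simpl in Hj0.
  rewrite Rminus_0_r in Hj0. apply Rabs_def2 in Hj0. lra.
Qed.

Lemma rec_bound (u v : nat -> C) (r M : R) :
  0 < r < 1 ->
  (forall N, u (S N) = (RtoC (1 - r) * u N + RtoC r * v N)%C) ->
  (forall N, Cmod (v N) <= M) -> Cmod (u 0%nat) <= M -> forall N, Cmod (u N) <= M.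
Proof.
  intros Hr Hu Hv H0. induction N. auto. rewrite Hu.
  eapply Rle_trans. apply Cmod_triangle. rewrite !Cmod_mult, !Cmod_RtoC_pos by lra.
  specialize (Hv N). nra.
Qed.

Lemma cv_bounded u L : cvC u L -> exists M, forall N, Cmod (u N) <= M.
Proof.
  intros H. destruct (H 1 Rlt_0_1) as [N0 HN0].
  assert (Hb : forall K, exists M, forall N, (N < K)%nat -> Cmod (u N) <= M).
  { induction K. exists 0. intros; lia.
    destruct IHK as [M HM]. exists (Rmax M (Cmod (u K))). intros N HN.
    destruct (Nat.eq_dec N K). subst. apply Rmax_r.
    eapply Rle_trans. apply HM. lia. apply Rmax_l. }
  destruct (Hb N0) as [M HM]. exists (Rmax M (Cmod L + 1)). intros N.
  destruct (Nat.lt_ge_cases N N0).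
  - eapply Rle_trans. apply HM; auto. apply Rmax_l.
  - eapply Rle_trans with (Cmod L + 1); [|apply Rmax_r].
    specialize (HN0 N H0).
    replace (u N) with ((u N - L) + L)%C by ring.
    eapply Rle_trans. apply Cmod_triangle. lra.
Qed.

Lemma bin_avg_ext r y z N : (forall n, y n = z n) -> bin_avg r y N = bin_avg r z N.
Proof. intros H. unfold bin_avg. apply sumC_ext. intros k _. rewrite H. reflexivity. Qed.

Lemma cvC_ext u v L : (forall N, u N = v N) -> cvC u L -> cvC v L.
Proof. intros H Hu eps He. destruct (Hu eps He) as [N0 HN]. exists N0. intros. rewrite <- H. auto. Qed.

Lemma shift_all r x L M : 0 < r < 1 -> cvC (bin_avg r x) L ->
  (forall N, Cmod (bin_avg r x N) <= M) ->
  forall k, cvC (bin_avg r (T k x)) L /\ forall N, Cmod (bin_avg r (T k x) N) <= M.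
Proof.
  intros Hr Hx HM. assert (HM0 : 0 <= M) by (eapply Rle_trans; [apply Cmod_ge_0|apply (HM 0%nat)]).
  induction k.
  - assert (E : forall N, bin_avg r x N = bin_avg r (T 0 x) N).
    { intros N. apply bin_avg_ext. intros n. unfold T. simpl. rewrite Nat.sub_0_r. reflexivity. }
    split. eapply cvC_ext; eauto. intros N. rewrite <- E. auto.
  - destruct IHk as [Hc Hb].
    assert (E : forall N, bin_avg r (T 1 (T k x)) N = bin_avg r (T (S k) x) N).
    { intros N. apply bin_avg_ext. intros n. symmetry. apply T_S. }
    split.
    + eapply cvC_ext. apply E. eapply rec_conv. exact Hr. intros N. apply rec_T1. exact Hc.
    + intros N. rewrite <- E. eapply rec_bound. exact Hr. intros N'. apply rec_T1. exact Hb.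
      unfold bin_avg. rewrite sum_O. unfold T. simpl Nat.leb. cbv beta iota.
      rewrite Cmult_0_r, Cmod_0. auto.
Qed.

Lemma conv_inner lam x n N : (n <= N)%nat ->
  sum_n (fun k => lam k * x (n - k)%nat)%C n = sum_n (fun k => lam k * T k x n)%C N.
Proof.
  intros H. induction H.
  - apply sumC_ext. intros k Hk. unfold T. destruct (Nat.leb_spec k n); [reflexivity|lia].
  - rewrite sumC_S, <- IHle. unfold T. destruct (Nat.leb_spec (S m) n); [lia|]. rewrite Cmult_0_r, Cplus_0_r. reflexivity.
Qed.

Lemma conv_decomp r lam x N :
  bin_avg r (conv lam x) N = sum_n (fun k => lam k * bin_avg r (T k x) N)%C N.
Proof.
  unfold bin_avg, conv.
  rewrite (sumC_ext _ (fun n => sum_n (fun k => binomC N n * RtoC (r ^ n * (1 - r) ^ (N - n)) * (lam k * T k x n))%C N)).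
  - rewrite sum_n_switch. apply sumC_ext. intros k _. rewrite <- sumC_scal.
    apply sumC_ext. intros n _. ringC.
  - intros n Hn. rewrite (conv_inner lam x n N Hn). rewrite sumC_scal. reflexivity.
Qed.

Lemma cvC_plus u v a b : cvC u a -> cvC v b -> cvC (fun N => u N + v N)%C (a + b)%C.
Proof.
  intros Hu Hv eps He. destruct (Hu (eps/2)) as [N1 H1]; [lra|].
  destruct (Hv (eps/2)) as [N2 H2]; [lra|]. exists (Nat.max N1 N2). intros N HN.
  replace (u N + v N - (a + b))%C with ((u N - a) + (v N - b))%C by ringC.
  eapply Rle_lt_trans. apply Cmod_triangle.
  specialize (H1 N ltac:(lia)). specialize (H2 N ltac:(lia)). lra.
Qed.

Lemma cvC_scal c u a : cvC u a -> cvC (fun N => c * u N)%C (c * a)%C.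
Proof.
  intros Hu eps He. destruct (Hu (eps / (Cmod c + 1))) as [N1 H1].
  { apply Rdiv_lt_0_compat; auto. pose proof (Cmod_ge_0 c). lra. }
  exists N1. intros N HN. specialize (H1 N HN).
  replace (c * u N - c * a)%C with (c * (u N - a))%C by ringC. rewrite Cmod_mult.
  pose proof (Cmod_ge_0 c). pose proof (Cmod_ge_0 (u N - a)%C).
  apply Rmult_lt_compat_r with (r := Cmod c + 1) in H1; [|lra].
  unfold Rdiv in H1. rewrite Rmult_assoc, Rinv_l in H1 by lra. nra.
Qed.

Lemma finite_lim (lam : nat -> C) (U : nat -> nat -> C) L :
  (forall k, cvC (U k) L) ->
  forall K, cvC (fun N => sum_n (fun k => lam k * U k N)%C K) (L * sum_n lam K)%C.
Proof.
  intros HU. induction K.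
  - eapply cvC_ext. 2: { rewrite sum_O. replace (L * lam 0%nat)%C with (lam 0%nat * L)%C by ringC.
      apply cvC_scal, HU. }
    intros N. rewrite sum_O. reflexivity.
  - eapply cvC_ext. 2: { rewrite sumC_S.
      replace (L * (sum_n lam K + lam (S K)))%C with (L * sum_n lam K + lam (S K) * L)%C by ringC.
      apply cvC_plus. apply IHK. apply cvC_scal, HU. }
    intros N. rewrite sumC_S. reflexivity.
Qed.

Theorem mainTheorem1 (lam x : nat -> C) (r : R) (L : C) :
  ex_series (fun n => Cmod (lam n)) ->
  0 < r < 1 ->
  filterlim (bin_avg r x) eventually (locally L) ->
  exists S : C, is_series lam S /\
    filterlim (bin_avg r (conv lam x)) eventually (locally (L * S)%C).
Proof.
  intros Habs Hr Hlim.
  assert (Hex : ex_series (K := C_AbsRing) (V := C_CompleteNormedModule) lam).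
  { apply (ex_series_le (K := C_AbsRing) (V := C_CompleteNormedModule) lam (fun n => Cmod (lam n))).
    intros n. apply Rle_refl. exact Habs. }
  destruct Hex as [Sl HS]. exists Sl. split. exact HS.
  apply cvC_equiv in Hlim. apply cvC_equiv.
  assert (HSc : cvC (sum_n lam) Sl).
  { intros eps He. pose proof (proj1 (filterlim_locally_ball_norm (K:=C_AbsRing) (U:=C_NormedModule) _ _) HS (mkposreal eps He)) as [N0 HN].
    exists N0. intros N HN'. specialize (HN N HN'). unfold ball_norm in HN. exact HN. }
  destruct (cv_bounded _ _ Hlim) as [M0 HM0].
  pose proof (shift_all r x L M0 Hr Hlim HM0) as Hsh.
  assert (HM0p : 0 <= M0) by (eapply Rle_trans; [apply Cmod_ge_0|apply (HM0 0%nat)]).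
  set (P := sum_n (fun n => Cmod (lam n))).
  set (A := Series (fun n => Cmod (lam n))).
  assert (HPA : is_lim_seq P A) by (apply (Series_correct _ Habs)).
  assert (HPle : forall n, P n <= A).
  { apply is_lim_seq_incr_compare. exact HPA. intros n. unfold P. rewrite sum_Sn.
    change (plus ?a ?b) with (a + b). pose proof (Cmod_ge_0 (lam (S n))). lra. }
  set (M1 := M0 + Cmod L + 1).
  assert (HM1 : 0 < M1) by (unfold M1; pose proof (Cmod_ge_0 L); lra).
  intros eps He.
  set (d := eps / (3 * M1)).
  assert (Hd : 0 < d) by (unfold d; apply Rdiv_lt_0_compat; lra).
  assert (Hd3 : M1 * d = eps / 3) by (unfold d; field; lra).
  apply is_lim_seq_spec in HPA. destruct (HPA (mkposreal d Hd)) as [K1 HK1].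
  destruct (HSc d Hd) as [K2 HK2].
  set (K := Nat.max K1 K2).
  assert (HAK : A - P K < d).
  { specialize (HK1 K ltac:(unfold K; lia)). simpl in HK1. apply Rabs_def2 in HK1. lra. }
  assert (HSK : Cmod (sum_n lam K - Sl)%C < d) by (apply HK2; unfold K; lia).
  destruct (finite_lim lam (fun k N => bin_avg r (T k x) N) L (fun k => proj1 (Hsh k)) K (eps/3)) as [N1 HN1]; [lra|].
  exists (Nat.max N1 K). intros N HN.
  rewrite conv_decomp.
  set (F := fun k => (lam k * bin_avg r (T k x) N)%C).
  assert (Hsplit : sum_n F N = (sum_n F K + sum_n_m F (S K) N)%C).
  { unfold sum_n at 1. rewrite (sum_n_m_Chasles F 0 K N) by lia. reflexivity. }
  assert (Htail : Cmod (sum_n_m F (S K) N) <= M0 * (A - P K)).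
  { rewrite Cmod_norm. eapply Rle_trans. apply (norm_sum_n_m (K:=R_AbsRing) (V:=C_R_NormedModule)).
    eapply Rle_trans. apply sum_n_m_le with (b := fun k => M0 * Cmod (lam k)).
    { intros k. unfold F. rewrite <- Cmod_norm, Cmod_mult.
      pose proof (Cmod_ge_0 (lam k)). pose proof (proj2 (Hsh k) N). nra. }
    rewrite (sum_n_m_mult_l (K := R_Ring)). rewrite (sum_n_m_sum_n (G:=R_AbelianGroup)) by lia.
    change (mult M0 (minus (P N) (P K)) <= M0 * (A - P K)).
    unfold mult, minus, plus, opp; simpl. specialize (HPle N). nra. }
  specialize (HN1 N ltac:(lia)). simpl in HN1.
  rewrite Hsplit.
  replace (sum_n F K + sum_n_m F (S K) N - L * Sl)%C with
    ((sum_n F K - L * sum_n lam K) + sum_n_m F (S K) N + L * (sum_n lam K - Sl))%C by ringC.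
  eapply Rle_lt_trans. apply Cmod_triangle. rewrite Cmod_mult.
  eapply Rle_lt_trans. apply Rplus_le_compat_r. apply Cmod_triangle.
  pose proof (Cmod_ge_0 L). pose proof (Cmod_ge_0 (sum_n lam K - Sl)%C).
  assert (Cmod L * Cmod (sum_n lam K - Sl)%C <= Cmod L * d) by nra.
  assert (M0 * (A - P K) <= M0 * d) by nra.
  assert (M0 * d + Cmod L * d < eps / 3) by (rewrite <- Hd3; unfold M1; nra).
  unfold F in *. lra.
Qed.
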